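(* Let $\lambda=2\cos(\pi/5)$ and let $H_5$ be the subgroup of $SL(2,\mathbb R)$ generated by $S=\begin{pmatrix}0&1\\-1&0\end{pmatrix}$ and $T=\begin{pmatrix}1&\lambda\\0&1\end{pmatrix}$. Let $p$ be an odd rational prime. Suppose that $H(p)$ contains an element $\sigma$ with $\sigma\equiv\begin{pmatrix}1&p\\0&1\end{pmatrix}\pmod{p^2}$. Then $[H(p^n):H(p^{n+1})]=p^6$ for every positive integer $n$, and $[H_5:H(p^n)]=p^{6(n-1)}[H_5:H(p)]$ for every positive integer $n$.
   Context: For $\alpha\in\mathbb Z[\lambda]$, $H(\alpha)=\{(a_{ij})\in H_5 : a_{11}-1,\ a_{22}-1,\ a_{12},\ a_{21}\in \alpha\mathbb Z[\lambda]\}$. Congruence of matrices modulo $p^2$ means entrywise congruence modulo the ideal $p^2\mathbb Z[\lambda]$. *)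

(* Defs.v *)
From HB Require Import structures.
From mathcomp Require Import all_boot all_order all_algebra.
From mathcomp Require Import all_classical all_reals all_analysis.
Set Implicit Arguments. Unset Strict Implicit. Unset Printing Implicit Defensive.
Import Order.TTheory GRing.Theory Num.Theory.
Local Open Scope ring_scope.

Definition mx2 (R : ringType) (a b c d : R) : 'M[R]_2 :=
  \matrix_(i < 2, j < 2)
    if (i : nat) == 0%N then (if (j : nat) == 0%N then a else b)
    else (if (j : nat) == 0%N then c else d).

Definition lam (R : realType) : R := 2 * cos (pi / 5%:R).

Definition Smx (R : realType) : 'M[R]_2 := mx2 0 1 (-1) 0.
Definition Tmx (R : realType) : 'M[R]_2 := mx2 1 (lam R) 0 1.

Inductive H5 (R : realType) : 'M[R]_2 -> Prop :=
| H5_one : H5 1%:M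
| H5_S : H5 (Smx R)
| H5_T : H5 (Tmx R)
| H5_mul A B : H5 A -> H5 B -> H5 (A *m B)
| H5_inv A : H5 A -> H5 (invmx A).

Definition inZlam (R : realType) (x : R) : Prop :=
  exists a b : int, x = a%:~R + b%:~R * lam R.

Definition inIdeal (R : realType) (alpha x : R) : Prop :=
  exists y, inZlam y /\ x = alpha * y.

Definition e11 (R : ringType) (A : 'M[R]_2) : R := A ord0 ord0.
Definition e12 (R : ringType) (A : 'M[R]_2) : R := A ord0 ord_max.
Definition e21 (R : ringType) (A : 'M[R]_2) : R := A ord_max ord0.
Definition e22 (R : ringType) (A : 'M[R]_2) : R := A ord_max ord_max.

Definition Hcong (R : realType) (alpha : R) (A : 'M[R]_2) : Prop :=
  [/\ H5 A, inIdeal alpha (e11 A - 1), inIdeal alpha (e22 A - 1),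
      inIdeal alpha (e12 A) & inIdeal alpha (e21 A)].

Definition congmx (R : realType) (alpha : R) (A B : 'M[R]_2) : Prop :=
  forall i j, inIdeal alpha (A i j - B i j).

(* [G : K] = k  (K a subgroup of G, k finite): there are k left-coset
   representatives g_0..g_{k-1} in G such that every g in G lies in exactly
   one coset g_i K. *)
Definition index_eq (R : realType) (G K : 'M[R]_2 -> Prop) (k : nat) : Prop :=
  exists f : 'I_k -> 'M[R]_2,
    (forall i, G (f i)) /\
    (forall g, G g -> exists! i, K (invmx (f i) *m g)).

(* Main.v *)
Require Import Defs.
From HB Require Import structures.
From mathcomp Require Import all_boot all_order all_algebra.
From mathcomp Require Import all_classical all_reals all_analysis.
From mathcomp Require Import ring lra zify.
Import Order.TTheory GRing.Theory Num.Theory.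
Local Open Scope ring_scope.

Lemma lam2 (R : realType) : lam R ^+ 2 = lam R + 1.
Proof.
rewrite /lam; set x := pi / 5%:R.
have hx : pi = x *+ 2 + x *+ 3.
  by rewrite -mulrnDr /x -mulr_natr; field.
have c3 : cos (x *+ 3) = - cos (x *+ 2).
  have -> : x *+ 3 = pi - x *+ 2 by rewrite {1}hx; ring.
  by rewrite cosB cospi sinpi; ring.
have e3 : cos (x *+ 3) = 4 * cos x ^+ 3 - 3 * cos x.
  have -> : x *+ 3 = x *+ 2 + x by ring.
  rewrite cosD cos_mulr2n sin_mulr2n.
  have := sin2cos2 x; move=> hs.
  have -> : cos x * sin x *+ 2 * sin x = cos x * (sin x ^+ 2) *+ 2 by ring.
  rewrite hs; ring.
have pos : 0 < cos x.
  apply: cos_gt0_pihalf; have hp := pi_gt0 R.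
  rewrite /x; apply/andP; split; lra.
rewrite c3 cos_mulr2n in e3.
have h : (cos x + 1) * (4 * cos x ^+ 2 - 2 * cos x - 1) = 0.
  have -> : (cos x + 1) * (4 * cos x ^+ 2 - 2 * cos x - 1) =
     (4 * cos x ^+ 3 - 3 * cos x) - (- (cos x ^+ 2 *+ 2 - 1)) by ring.
  by rewrite -e3 subrr.
move/eqP: h; rewrite mulf_eq0 => /orP [|/eqP h]; first by move/eqP => h; lra.
by apply/eqP; rewrite -subr_eq0; apply/eqP; rewrite -[RHS]h; ring.
Qed.
Lemma descent (n : nat) (a b : int) : (`|b| <= n)%N -> a * a + a * b - b * b = 0 -> b = 0.
Proof.
elim: n a b => [|n IH] a b hb h; first by lia.
have ea := divz_eq a 2; have eb := divz_eq b 2.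
set qa := (a %/ 2)%Z in ea; set ra := (a %% 2)%Z in ea.
set qb := (b %/ 2)%Z in eb; set rb := (b %% 2)%Z in eb.
have hra : (0 <= ra < 2)%R by rewrite /ra modz_ge0 // ltz_pmod.
have hrb : (0 <= rb < 2)%R by rewrite /rb modz_ge0 // ltz_pmod.
have [ra0|ra1] : ra = 0 \/ ra = 1 by lia.
all: have [rb0|rb1] : rb = 0 \/ rb = 1 by lia.
- rewrite ea eb ra0 rb0 !addr0 in h hb.
  have h' : qa * qa + qa * qb - qb * qb = 0 by lia.
  case: (qb =P 0) => [q0|qn0]; first by rewrite eb q0 rb0.
  have : (`|qb| <= n)%N by lia.
  by move=> /IH /(_ h') q0.
- rewrite ea eb ra0 rb1 in h; lia.
- rewrite ea eb ra1 rb0 in h; lia.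
- rewrite ea eb ra1 rb1 in h; lia.
Qed.

Definition Zl (R : realType) : {pred R} := fun x => `[< inZlam x >].

Lemma ZlP (R : realType) (x : R) : x \in Zl R <-> inZlam x.
Proof. by rewrite /Zl unfold_in; split => [/asboolP|?]; [|apply/asboolP]. Qed.

Lemma Zl_subring (R : realType) : subring_closed (Zl R).
Proof.
split.
- by apply/ZlP; exists 1, 0; rewrite mul0r addr0.
- move=> x y /ZlP [a [b ->]] /ZlP [c [d ->]]; apply/ZlP; exists (a - c), (b - d).
  rewrite !rmorphB /=; ring.
- move=> x y /ZlP [a [b ->]] /ZlP [c [d ->]]; apply/ZlP.
  exists (a * c + b * d), (a * d + b * c + b * d).
  rewrite !rmorphD !rmorphM /=.
  have h := lam2 R.
  have -> : (a%:~R + b%:~R * lam R) * (c%:~R + d%:~R * lam R) =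
     a%:~R * c%:~R + (a%:~R * d%:~R + b%:~R * c%:~R) * lam R + b%:~R * d%:~R * lam R ^+ 2 :> R by ring.
  rewrite h; ring.
Qed.

HB.instance Definition _ (R : realType) := GRing.isSubringClosed.Build R (Zl R) (Zl_subring R).

Lemma Zl_lam (R : realType) : lam R \in Zl R.
Proof. by apply/ZlP; exists 0, 1; rewrite mul1r add0r. Qed.

Lemma Zl_int (R : realType) (a : int) : a%:~R \in Zl R.
Proof. by apply/ZlP; exists a, 0; rewrite mul0r addr0. Qed.

Lemma lam_irr (R : realType) (a b : int) :
  a%:~R + b%:~R * lam R = 0 :> R -> a = 0 /\ b = 0.
Proof.
move=> h.
have ha : a%:~R = - (b%:~R * lam R) :> R by rewrite -(subr0 (a%:~R)) -h; ring.
have e : (a * a + a * b - b * b)%:~R = 0 :> R.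
  rewrite !rmorphB !rmorphD !rmorphM /= ha.
  have -> : - (b%:~R * lam R) * - (b%:~R * lam R) + - (b%:~R * lam R) * b%:~R - b%:~R * b%:~R
     = b%:~R * b%:~R * (lam R ^+ 2 - lam R - 1) :> R by ring.
  by rewrite lam2; ring.
move/eqP: e; rewrite intr_eq0 => /eqP e.
have b0 := @descent _ a b (leqnn _) e.
by split => //; move: ha; rewrite b0 mul0r oppr0 => /eqP; rewrite intr_eq0 => /eqP.
Qed.

Definition dvs {R : realType} (q x : R) := q^-1 * x \in Zl R.

Lemma dvs0 (R : realType) (q : R) : dvs q 0.
Proof. by rewrite /dvs mulr0 rpred0. Qed.

Lemma dvsD (R : realType) (q x y : R) : dvs q x -> dvs q y -> dvs q (x + y).
Proof. by rewrite /dvs mulrDr; apply: rpredD. Qed.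

Lemma dvsN (R : realType) (q x : R) : dvs q x -> dvs q (- x).
Proof. by rewrite /dvs mulrN rpredN. Qed.

Lemma dvsB (R : realType) (q x y : R) : dvs q x -> dvs q y -> dvs q (x - y).
Proof. by move=> hx hy; apply: dvsD => //; apply: dvsN. Qed.

Lemma dvsMl (R : realType) (q x y : R) : y \in Zl R -> dvs q x -> dvs q (y * x).
Proof. by rewrite /dvs mulrCA; apply: rpredM. Qed.

Lemma dvsMr (R : realType) (q x y : R) : y \in Zl R -> dvs q x -> dvs q (x * y).
Proof. by rewrite mulrC; apply: dvsMl. Qed.

Lemma dvsMM (R : realType) (q r x y : R) : dvs q x -> dvs r y -> dvs (q * r) (x * y).
Proof.
rewrite /dvs invfM => hx hy.
have -> : q^-1 * r^-1 * (x * y) = (q^-1 * x) * (r^-1 * y) by ring.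
exact: rpredM.
Qed.

Lemma dvs_weak (R : realType) (q r x : R) : r != 0 -> r \in Zl R -> dvs (q * r) x -> dvs q x.
Proof.
move=> r0 hr; rewrite /dvs => h.
have -> : q^-1 * x = r * ((q * r)^-1 * x).
  by rewrite invfM -mulrA mulrCA mulVKf.
exact: rpredM.
Qed.

Lemma dvs_mulq (R : realType) (q y : R) : q != 0 -> y \in Zl R -> dvs q (q * y).
Proof. by move=> q0 hy; rewrite /dvs mulKf. Qed.

Lemma dvs_scale (R : realType) (q r x : R) : q != 0 -> dvs (q * r) (q * x) = dvs r x.
Proof. by move=> q0; rewrite /dvs invfM -mulrA [q^-1 * _]mulrCA mulKf. Qed.

Lemma dvs1 (R : realType) (x : R) : dvs 1 x = (x \in Zl R).
Proof. by rewrite /dvs invr1 mul1r. Qed.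

Lemma inIdealE (R : realType) (q x : R) : q != 0 -> inIdeal q x <-> dvs q x.
Proof.
move=> q0; split.
  by move=> [y [/ZlP hy ->]]; apply: dvs_mulq.
by move=> h; exists (q^-1 * x); split; [apply/ZlP|rewrite mulVKf].
Qed.

Lemma Zl_nat (R : realType) (n : nat) : n%:R \in Zl R.
Proof. exact: rpred_nat. Qed.

Lemma residue (R : realType) (p : nat) (x : R) : (0 < p)%N -> x \in Zl R ->
  exists u v : 'I_p, dvs (p%:R) (x - ((u : nat)%:R + (v : nat)%:R * lam R)).
Proof.
move=> p0 /ZlP [a [b ->]].
have pz : (0 < p%:Z)%R by rewrite ltz_nat.
have ua : (absz (a %% p)%Z < p)%N.
  have := ltz_pmod a pz; have := modz_ge0 a (lt0r_neq0 pz); lia.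
have ub : (absz (b %% p)%Z < p)%N.
  have := ltz_pmod b pz; have := modz_ge0 b (lt0r_neq0 pz); lia.
exists (Ordinal ua), (Ordinal ub) => /=.
have e (z : int) : ((absz (z %% p)%Z)%:R : R) = (z %% p)%Z%:~R.
  rewrite -[LHS]/((absz (z %% p)%Z)%:Z%:~R) abszE ger0_norm //.
  exact: modz_ge0 (lt0r_neq0 pz).
rewrite !e.
have -> : a%:~R + b%:~R * lam R - ((a %% p)%Z%:~R + (b %% p)%Z%:~R * lam R) =
  p%:R * ((a %/ p)%Z%:~R + (b %/ p)%Z%:~R * lam R) :> R.
  rewrite {1}(divz_eq a p) {1}(divz_eq b p) !rmorphD !rmorphM /=; ring.
apply: dvs_mulq; first by rewrite pnatr_eq0 -lt0n.
by apply/ZlP; exists (a %/ p)%Z, (b %/ p)%Z.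
Qed.

Lemma natzR (R : realType) (n : nat) : (n%:Z)%:~R = n%:R :> R.
Proof. by []. Qed.

Lemma ltp_eq (p u u' : nat) (c : int) : (u < p)%N -> (u' < p)%N ->
  u%:Z - u'%:Z - p%:Z * c = 0 -> u = u'.
Proof.
move=> hu hu' h.
have [c0|c0|c0] := ltrgtP c 0; last by rewrite c0 in h; lia.
- have : (p%:Z * c <= - p%:Z)%R by nia.
  lia.
- have : (p%:Z <= p%:Z * c)%R by nia.
  lia.
Qed.

Lemma residue_uniq (R : realType) (p : nat) (u v u' v' : 'I_p) :
  dvs (p%:R : R) (((u : nat)%:R + (v : nat)%:R * lam R) - ((u' : nat)%:R + (v' : nat)%:R * lam R)) ->
  u = u' /\ v = v'.
Proof.
have p0 : (0 < p)%N by case: p u {v u' v'} => [[]|].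
rewrite /dvs => /ZlP [c [d]] h.
have pR : (p%:R : R) != 0 by rewrite pnatr_eq0 -lt0n.
have e : ((u : nat)%:R + (v : nat)%:R * lam R) - ((u' : nat)%:R + (v' : nat)%:R * lam R)
      = p%:R * (c%:~R + d%:~R * lam R) :> R by rewrite -h mulVKf.
have h2 : ((u : nat)%:Z - (u' : nat)%:Z - p%:Z * c)%:~R + ((v : nat)%:Z - (v' : nat)%:Z - p%:Z * d)%:~R * lam R = 0 :> R.
  rewrite !rmorphB !rmorphM /= !natzR.
  rewrite -[LHS]subr0 -(subrr (p%:R * (c%:~R + d%:~R * lam R) : R)) -{1}e; ring.
have [h3 h4] := @lam_irr R _ _ h2.
split; apply: val_inj => /=.
  exact: (@ltp_eq p _ _ c (ltn_ord u) (ltn_ord u') h3).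
exact: (@ltp_eq p _ _ d (ltn_ord v) (ltn_ord v') h4).
Qed.

Set Implicit Arguments. Unset Strict Implicit.

Lemma I2_ind (P : 'I_2 -> Prop) : P ord0 -> P ord_max -> forall i, P i.
Proof.
move=> h0 h1 [[|[|//]]] hi.
  by rewrite (_ : Ordinal hi = ord0) //; apply: val_inj.
by rewrite (_ : Ordinal hi = ord_max) //; apply: val_inj.
Qed.

Lemma mx2E {R : ringType} (a b c d : R) :
  [/\ mx2 a b c d ord0 ord0 = a, mx2 a b c d ord0 ord_max = b,
      mx2 a b c d ord_max ord0 = c & mx2 a b c d ord_max ord_max = d].
Proof. by rewrite !mxE. Qed.

Lemma mx2_eta {R : ringType} (A : 'M[R]_2) :
  A = mx2 (A ord0 ord0) (A ord0 ord_max) (A ord_max ord0) (A ord_max ord_max).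
Proof.
apply/matrixP; apply: I2_ind; apply: I2_ind; by rewrite !mxE.
Qed.

Lemma mx2_eq {R : ringType} (a b c d a' b' c' d' : R) :
  a = a' -> b = b' -> c = c' -> d = d' -> mx2 a b c d = mx2 a' b' c' d'.
Proof. by move=> -> -> -> ->. Qed.

Lemma mx2_add {R : ringType} (a b c d a' b' c' d' : R) :
  mx2 a b c d + mx2 a' b' c' d' = mx2 (a + a') (b + b') (c + c') (d + d').
Proof. apply/matrixP; apply: I2_ind; apply: I2_ind; by rewrite !mxE. Qed.

Lemma mx2_opp {R : ringType} (a b c d : R) :
  - mx2 a b c d = mx2 (- a) (- b) (- c) (- d).
Proof. apply/matrixP; apply: I2_ind; apply: I2_ind; by rewrite !mxE. Qed.

Lemma mx2_scale {R : ringType} (k a b c d : R) :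
  k *: mx2 a b c d = mx2 (k * a) (k * b) (k * c) (k * d).
Proof. apply/matrixP; apply: I2_ind; apply: I2_ind; by rewrite !mxE. Qed.

Lemma mx2_muln {R : ringType} (a b c d : R) n :
  mx2 a b c d *+ n = mx2 (a *+ n) (b *+ n) (c *+ n) (d *+ n).
Proof. apply/matrixP; apply: I2_ind; apply: I2_ind; by rewrite mulmxnE !mxE. Qed.

Lemma mx2_one {R : ringType} : 1%:M = mx2 1 0 0 (1 : R).
Proof. apply/matrixP; apply: I2_ind; apply: I2_ind; by rewrite !mxE. Qed.

Lemma mx2_mul {R : ringType} (a b c d a' b' c' d' : R) :
  mx2 a b c d *m mx2 a' b' c' d' =
  mx2 (a * a' + b * c') (a * b' + b * d') (c * a' + d * c') (c * b' + d * d').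
Proof.
apply/matrixP; apply: I2_ind; apply: I2_ind;
  by rewrite !mxE !big_ord_recl big_ord0 /= !mxE /=  addr0.
Qed.

Lemma mx2_det {R : comRingType} (a b c d : R) : \det (mx2 a b c d) = a * d - b * c.
Proof.
rewrite (expand_det_row _ ord0) !big_ord_recl big_ord0 /cofactor /=.
rewrite !det_mx11 !mxE /= /bump /= expr0 expr1; ring.
Qed.

Definition zmx {R : realType} (A : 'M[R]_2) := forall i j, A i j \in Zl R.
Definition dvm {R : realType} (q : R) (A : 'M[R]_2) := forall i j, dvs q (A i j).

Lemma dvm1 {R : realType} (A : 'M[R]_2) : dvm 1 A <-> zmx A.
Proof. by split => h i j; move: (h i j); rewrite dvs1. Qed.

Lemma zmx1 {R : realType} : zmx (1%:M : 'M[R]_2).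
Proof. by move=> i j; rewrite !mxE rpredMn // rpred1. Qed.

Lemma zmxD {R : realType} (A B : 'M[R]_2) : zmx A -> zmx B -> zmx (A + B).
Proof. by move=> ha hb i j; rewrite !mxE rpredD. Qed.

Lemma zmxN {R : realType} (A : 'M[R]_2) : zmx A -> zmx (- A).
Proof. by move=> ha i j; rewrite !mxE rpredN. Qed.

Lemma zmxB {R : realType} (A B : 'M[R]_2) : zmx A -> zmx B -> zmx (A - B).
Proof. by move=> ha hb; apply: zmxD => //; apply: zmxN. Qed.

Lemma zmxM {R : realType} (A B : 'M[R]_2) : zmx A -> zmx B -> zmx (A *m B).
Proof.
move=> ha hb i j; rewrite !mxE; apply: rpred_sum => k _; exact: rpredM.
Qed.

Lemma zmxZ {R : realType} (k : R) (A : 'M[R]_2) : k \in Zl R -> zmx A -> zmx (k *: A).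
Proof. by move=> hk ha i j; rewrite !mxE rpredM. Qed.

Lemma zmx_muln {R : realType} (A : 'M[R]_2) n : zmx A -> zmx (A *+ n).
Proof. by move=> ha i j; rewrite mulmxnE rpredMn. Qed.

Lemma zmxX {R : realType} (A : 'M[R]_2) n : zmx A -> zmx (A ^+ n).
Proof.
move=> ha; elim: n => [|n IH]; first by rewrite expr0; apply: zmx1.
by rewrite exprS; apply: zmxM.
Qed.

Lemma zmx_mx2 {R : realType} (a b c d : R) :
  a \in Zl R -> b \in Zl R -> c \in Zl R -> d \in Zl R -> zmx (mx2 a b c d).
Proof. by move=> *; apply: I2_ind; apply: I2_ind; rewrite !mxE. Qed.

Lemma dvm0 {R : realType} (q : R) : dvm q 0.
Proof. by move=> i j; rewrite mxE; apply: dvs0. Qed.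

Lemma dvmD {R : realType} (q : R) A B : dvm q A -> dvm q B -> dvm q (A + B).
Proof. by move=> ha hb i j; rewrite mxE; apply: dvsD. Qed.

Lemma dvmN {R : realType} (q : R) A : dvm q A -> dvm q (- A).
Proof. by move=> ha i j; rewrite mxE; apply: dvsN. Qed.

Lemma dvmB {R : realType} (q : R) A B : dvm q A -> dvm q B -> dvm q (A - B).
Proof. by move=> ha hb; apply: dvmD => //; apply: dvmN. Qed.

Lemma dvm_muln {R : realType} (q : R) A n : dvm q A -> dvm q (A *+ n).
Proof.
move=> ha; elim: n => [|n IH]; first by rewrite mulr0n; apply: dvm0.
by rewrite mulrS; apply: dvmD.
Qed.

Lemma dvm_sum {R : realType} (q : R) n (F : 'I_n -> 'M[R]_2) :
  (forall i, dvm q (F i)) -> dvm q (\sum_(i < n) F i).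
Proof.
move=> h; apply: (big_ind (dvm q)) => //; [exact: dvm0|move=> *; exact: dvmD].
Qed.

Lemma dvmMl {R : realType} (q : R) (C A : 'M[R]_2) : zmx C -> dvm q A -> dvm q (C *m A).
Proof.
move=> hc ha i j; rewrite mxE; apply: (big_ind (dvs q)); [exact: dvs0|move=> *; exact: dvsD|].
move=> k _; exact: dvsMl.
Qed.

Lemma dvmMr {R : realType} (q : R) (C A : 'M[R]_2) : zmx C -> dvm q A -> dvm q (A *m C).
Proof.
move=> hc ha i j; rewrite mxE; apply: (big_ind (dvs q)); [exact: dvs0|move=> *; exact: dvsD|].
move=> k _; exact: dvsMr.
Qed.

Lemma dvmMM {R : realType} (q r : R) (A B : 'M[R]_2) : dvm q A -> dvm r B -> dvm (q * r) (A *m B).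
Proof.
move=> ha hb i j; rewrite mxE; apply: (big_ind (dvs (q * r))); [exact: dvs0|move=> *; exact: dvsD|].
move=> k _; exact: dvsMM.
Qed.

Lemma dvm_weak {R : realType} (q r : R) A : r != 0 -> r \in Zl R -> dvm (q * r) A -> dvm q A.
Proof. by move=> r0 hr h i j; apply: dvs_weak (h i j). Qed.

Lemma dvm_scale {R : realType} (q r : R) A : q != 0 -> dvm (q * r) (q *: A) <-> dvm r A.
Proof. by move=> q0; split => h i j; move: (h i j); rewrite mxE dvs_scale. Qed.

Lemma dvm_mulq {R : realType} (q : R) A : q != 0 -> zmx A -> dvm q (q *: A).
Proof. by move=> q0 ha i j; rewrite mxE; apply: dvs_mulq. Qed.

Lemma dvmX {R : realType} (q : R) A k : dvm q A -> dvm (q ^+ k) (A ^+ k).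
Proof.
move=> ha; elim: k => [|k IH]; first by rewrite !expr0; apply/dvm1; apply: zmx1.
by rewrite !exprS; apply: dvmMM.
Qed.

Lemma invmx2 {R : realType} (a b c d : R) : a * d - b * c = 1 ->
  invmx (mx2 a b c d) = mx2 d (- b) (- c) a.
Proof.
move=> h.
have u : mx2 a b c d \in unitmx by rewrite unitmxE mx2_det h unitr1.
have e : mx2 a b c d *m mx2 d (- b) (- c) a = 1%:M.
  by rewrite mx2_mul mx2_one; apply: mx2_eq; rewrite -?h; ring.
by rewrite -[RHS]mul1mx -(mulVmx u) -mulmxA e mulmx1.
Qed.

Lemma H5_zmx_det {R : realType} (A : 'M[R]_2) : H5 A -> zmx A /\ \det A = 1.
Proof.
elim => {A}.
- by split; [apply: zmx1|rewrite det1].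
- split; first by apply: zmx_mx2; rewrite ?rpred0 ?rpred1 ?rpredN1.
  by rewrite /Smx mx2_det; ring.
- split; first by apply: zmx_mx2; rewrite ?rpred0 ?rpred1 ?Zl_lam.
  by rewrite /Tmx mx2_det; ring.
- move=> A B _ [ha da] _ [hb db]; split; first exact: zmxM.
  by rewrite det_mulmx da db mulr1.
- move=> A _ [ha da]; split; last by rewrite det_inv da invr1.
  rewrite (mx2_eta A) invmx2; last by rewrite -da [in RHS](mx2_eta A) mx2_det.
  by apply: zmx_mx2; rewrite ?rpredN; apply: ha.
Qed.

Lemma H5_zmx {R : realType} (A : 'M[R]_2) : H5 A -> zmx A.
Proof. by case/H5_zmx_det. Qed.

Lemma H5_det {R : realType} (A : 'M[R]_2) : H5 A -> \det A = 1.
Proof. by case/H5_zmx_det. Qed.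

Lemma H5_unit {R : realType} (A : 'M[R]_2) : H5 A -> A \in unitmx.
Proof. by move/H5_det; rewrite unitmxE => ->; rewrite unitr1. Qed.

Lemma H5_invz {R : realType} (A : 'M[R]_2) : H5 A -> zmx (invmx A).
Proof. by move=> h; apply: H5_zmx; apply: H5_inv. Qed.

Lemma H5X {R : realType} (A : 'M[R]_2) k : H5 A -> H5 (A ^+ k).
Proof.
move=> h; elim: k => [|k IH]; first by rewrite expr0; apply: H5_one.
by rewrite exprS; apply: H5_mul.
Qed.

Lemma invmxMM {R : realType} (A B : 'M[R]_2) : H5 A -> H5 B -> invmx (A *m B) = invmx B *m invmx A.
Proof.
move=> ha hb.
have ua := H5_unit ha; have ub := H5_unit hb.
have uab : A *m B \in unitmx by apply: H5_unit; apply: H5_mul.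
have e : A *m B *m (invmx B *m invmx A) = 1%:M.
  by rewrite -mulmxA (mulmxA B) (mulmxV ub) mul1mx (mulmxV ua).
by rewrite -[RHS]mul1mx -(mulVmx uab) -mulmxA e mulmx1.
Qed.

Lemma Pnz {R : realType} (p n : nat) : (0 < p)%N -> (p%:R : R) ^+ n != 0.
Proof. by move=> p0; rewrite expf_neq0 // pnatr_eq0 -lt0n. Qed.

Lemma ZlX {R : realType} (p n : nat) : (p%:R : R) ^+ n \in Zl R.
Proof. by rewrite rpredX // rpred_nat. Qed.

Lemma dvm_le {R : realType} (p a b : nat) (X : 'M[R]_2) : (0 < p)%N -> (b <= a)%N ->
  dvm ((p%:R : R) ^+ a) X -> dvm ((p%:R : R) ^+ b) X.
Proof.
move=> p0 ba h; apply: (@dvm_weak _ _ ((p%:R : R) ^+ (a - b))).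
- exact: Pnz.
- exact: ZlX.
- by rewrite -exprD subnKC.
Qed.

Lemma onemxE {R : realType} : (1%:M : 'M[R]_2) ord0 ord0 = 1 /\ (1%:M : 'M[R]_2) ord0 ord_max = 0
  /\ (1%:M : 'M[R]_2) ord_max ord0 = 0 /\ (1%:M : 'M[R]_2) ord_max ord_max = 1.
Proof. by rewrite !mxE. Qed.

Lemma HcongE {R : realType} (q : R) A : q != 0 -> Hcong q A <-> H5 A /\ dvm q (A - 1%:M).
Proof.
move=> q0; have [h00 [h01 [h10 h11]]] := @onemxE R.
split.
- case=> hA i11 i22 i12 i21; split => //.
  apply: I2_ind; apply: I2_ind; rewrite !mxE /= ?subr0; apply/inIdealE => //.
- case=> hA hd; split => //; apply/inIdealE => //.
  + by move: (hd ord0 ord0); rewrite !mxE /= ?subr0.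
  + by move: (hd ord_max ord_max); rewrite !mxE /= ?subr0.
  + by move: (hd ord0 ord_max); rewrite !mxE /= ?subr0.
  + by move: (hd ord_max ord0); rewrite !mxE /= ?subr0.
Qed.

Lemma congmxE {R : realType} (q : R) A B : q != 0 -> congmx q A B <-> dvm q (A - B).
Proof.
move=> q0; split => h i j.
- by rewrite !mxE; apply/inIdealE => //; apply: h.
- by apply/inIdealE => //; move: (h i j); rewrite !mxE.
Qed.

Lemma coset_crit {R : realType} (q : R) (f g : 'M[R]_2) : q != 0 -> H5 f -> H5 g ->
  Hcong q (invmx f *m g) <-> dvm q (g - f).
Proof.
move=> q0 hf hg; rewrite HcongE //.
have uf := H5_unit hf.
have e1 : invmx f *m g - 1%:M = invmx f *m (g - f) by rewrite mulmxBr (mulVmx uf).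
have e2 : g - f = f *m (invmx f *m g - 1%:M) by rewrite mulmxBr mulmxA (mulmxV uf) mul1mx mulmx1.
split.
- by case=> _ h; rewrite e2; apply: dvmMl => //; apply: H5_zmx.
- move=> h; split; first by apply: H5_mul => //; apply: H5_inv.
  by rewrite e1; apply: dvmMl => //; apply: H5_invz.
Qed.

Lemma Hcong_mul {R : realType} (q : R) A B : q != 0 -> Hcong q A -> Hcong q B -> Hcong q (A *m B).
Proof.
move=> q0 /(HcongE _ q0) [ha da] /(HcongE _ q0) [hb db]; apply/HcongE => //; split.
  exact: H5_mul.
have -> : A *m B - 1%:M = (A - 1%:M) *m B + (B - 1%:M) by rewrite mulmxBl mul1mx addrA subrK.
by apply: dvmD => //; apply: dvmMr => //; apply: H5_zmx.
Qed.

Lemma Hcong_one {R : realType} (q : R) : Hcong q 1%:M.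
Proof.
split; first exact: H5_one.
all: exists 0; split; [by exists 0, 0; rewrite mul0r addr0|].
all: by rewrite /e11 /e12 /e21 /e22 !mxE /= ?subrr mulr0.
Qed.

Lemma Hcong_le {R : realType} (p a b : nat) A : (0 < p)%N -> (b <= a)%N ->
  Hcong ((p%:R : R) ^+ a) A -> Hcong ((p%:R : R) ^+ b) A.
Proof.
move=> p0 ba /(HcongE _ (Pnz _ p0)) [h d]; apply/HcongE; first exact: Pnz.
by split => //; apply: dvm_le d.
Qed.

Definition goodG {R : realType} (p n : nat) (G B : 'M[R]_2) :=
  [/\ H5 G, zmx B & dvm ((p%:R : R) ^+ n.+1) (G - 1%:M - ((p%:R : R) ^+ n) *: B)].

Lemma zmx0 {R : realType} : zmx (0 : 'M[R]_2).
Proof. by move=> i j; rewrite mxE rpred0. Qed.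

Lemma good_dvm {R : realType} (p n : nat) (G B : 'M[R]_2) : (0 < p)%N ->
  goodG p n G B -> dvm ((p%:R : R) ^+ n) (G - 1%:M).
Proof.
move=> p0 [hG hB d].
have -> : G - 1%:M = (G - 1%:M - ((p%:R : R) ^+ n) *: B) + ((p%:R : R) ^+ n) *: B.
  by rewrite subrK.
apply: dvmD; first exact: dvm_le d.
by apply: dvm_mulq => //; apply: Pnz.
Qed.

Lemma good_one {R : realType} (p n : nat) : goodG p n (1%:M : 'M[R]_2) 0.
Proof.
split; [exact: H5_one|exact: zmx0|].
by rewrite scaler0 subr0 subrr; apply: dvm0.
Qed.

Lemma mx_id1 {R : realType} (X G G' B B' : 'M[R]_2) (c : R) :
  X - 1%:M - c *: (B + B') =
  (G - 1%:M - c *: B) + (G' - 1%:M - c *: B') + (X - G - G' + 1%:M).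
Proof. apply/matrixP => i j; rewrite !mxE; ring. Qed.

Lemma good_mul {R : realType} (p n : nat) (G G' B B' : 'M[R]_2) : (0 < p)%N -> (0 < n)%N ->
  goodG p n G B -> goodG p n G' B' -> goodG p n (G *m G') (B + B').
Proof.
move=> p0 n0 g1 g2; have d1 := good_dvm p0 g1; have d2 := good_dvm p0 g2.
case: g1 g2 => [h1 b1 e1] [h2 b2 e2].
split; [exact: H5_mul|exact: zmxD|].
rewrite (mx_id1 _ G G').
have -> : G *m G' - G - G' + 1%:M = (G - 1%:M) *m (G' - 1%:M).
  rewrite mulmxBl mulmxBr !mul1mx mulmx1; move: (G *m G') => X.
  by apply/matrixP => i j; rewrite !mxE; ring.
apply: dvmD; first exact: dvmD.
apply: (@dvm_le _ p (n + n)) => //; first by lia.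
by rewrite exprD; apply: dvmMM.
Qed.

Lemma good_pow {R : realType} (p n : nat) (G B : 'M[R]_2) k : (0 < p)%N -> (0 < n)%N ->
  goodG p n G B -> goodG p n (G ^+ k) (B *+ k).
Proof.
move=> p0 n0 g; elim: k => [|k IH]; first by rewrite expr0 mulr0n; apply: good_one.
by rewrite exprS mulrS; apply: good_mul.
Qed.

Lemma good_conj {R : realType} (p n : nat) (h G B : 'M[R]_2) : H5 h ->
  goodG p n G B -> goodG p n (h *m G *m invmx h) (h *m B *m invmx h).
Proof.
move=> hh [hG hB d]; have uh := H5_unit hh.
split.
- by apply: H5_mul; [apply: H5_mul|apply: H5_inv].
- by apply: zmxM; [apply: zmxM => //; apply: H5_zmx|apply: H5_invz].
have -> : h *m G *m invmx h - 1%:M - (p%:R : R) ^+ n *: (h *m B *m invmx h) =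
  h *m (G - 1%:M - (p%:R : R) ^+ n *: B) *m invmx h.
  by rewrite !mulmxBr !mulmxBl mulmx1 (mulmxV uh) -scalemxAr -scalemxAl.
apply: dvmMr; first exact: H5_invz.
by apply: dvmMl => //; apply: H5_zmx.
Qed.

Lemma good_congr {R : realType} (p n : nat) (G B B' : 'M[R]_2) : (0 < p)%N ->
  goodG p n G B -> zmx B' -> dvm (p%:R : R) (B - B') -> goodG p n G B'.
Proof.
move=> p0 [hG hB d] hB' dB; split => //.
have -> : G - 1%:M - (p%:R : R) ^+ n *: B' =
  (G - 1%:M - (p%:R : R) ^+ n *: B) + (p%:R : R) ^+ n *: (B - B').
  by apply/matrixP => i j; rewrite !mxE; ring.
apply: dvmD => //; rewrite exprSr; apply/dvm_scale => //; exact: Pnz.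
Qed.

Lemma good_eq {R : realType} (p n : nat) (G B B' : 'M[R]_2) :
  goodG p n G B -> B = B' -> goodG p n G B'.
Proof. by move=> g <-. Qed.

Lemma lift_term {R : realType} (p n k : nat) (U : 'M[R]_2) : prime p -> (2 < p)%N -> (0 < n)%N ->
  (2 <= k <= p)%N -> dvm ((p%:R : R) ^+ n) U -> dvm ((p%:R : R) ^+ n.+2) (U ^+ k *+ 'C(p, k)).
Proof.
move=> pr p2 n0 /andP [k2 kp] dU.
have p0 : (0 < p)%N by apply: prime_gt0.
have dk : dvm ((p%:R : R) ^+ (n * k)) (U ^+ k) by rewrite exprM; apply: dvmX.
have [kp'|kp'] := ltnP k p.
- have /dvdnP [m hm] : (p %| 'C(p, k))%N by apply: prime_dvd_bin => //; lia.
  have pz : (p%:R : R) != 0 by rewrite pnatr_eq0 -lt0n.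
  rewrite hm; have -> : U ^+ k *+ (m * p) = (p%:R : R) *: (U ^+ k *+ m) by rewrite scaler_nat mulrnA.
  rewrite exprS; apply/(dvm_scale _ _ pz).
  apply: dvm_muln; apply: (dvm_le p0 _ dk); nia.
- have e : k = p by lia.
  rewrite e binn mulr1n; rewrite e in dk; apply: (dvm_le p0 _ dk); nia.
Qed.

Lemma good_lift {R : realType} (p n : nat) (G B : 'M[R]_2) : prime p -> odd p -> (0 < n)%N ->
  goodG p n G B -> goodG p n.+1 (G ^+ p) B.
Proof.
move=> pr po n0 g.
have p0 : (0 < p)%N by apply: prime_gt0.
have p2 : (2 < p)%N.
  have := prime_gt1 pr; case: p {g p0} pr po => [|[|[|]]] //.
have dU := good_dvm p0 g.
case: g => [hG hB d]; split => //; first exact: H5X.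
move: dU d; set U := G - 1%:M => dU d.
have eG : G = U + 1 by rewrite /U subrK.
case: p pr po p0 p2 dU d {eG} (eG) => [|[|p']] // pr po p0 p2 dU d eG.
rewrite eG exprD1n big_ord_recl big_ord_recl /= expr0 bin0 expr1 bin1 mulr1n.
set S := \sum_(i < p'.+1) _.
have -> : 1 + (U *+ p'.+2 + S) - 1%:M - (p'.+2%:R : R) ^+ n.+1 *: B =
  (p'.+2%:R : R) *: (U - (p'.+2%:R : R) ^+ n *: B) + S.
  rewrite scalerBr scalerA -exprS scaler_nat.
  by move: S => S; apply/matrixP => i j; rewrite !mxE; ring.
apply: dvmD.
  have pz : (p'.+2%:R : R) != 0 by rewrite pnatr_eq0.
  by rewrite exprS; apply/(dvm_scale _ _ pz).
apply: dvm_sum => i; apply: lift_term => //.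
by rewrite /bump /=; have := ltn_ord i; lia.
Qed.

Definition gd {R : realType} (p n : nat) (B : 'M[R]_2) := exists G, goodG p n G B.

Lemma gd_add {R : realType} (p n : nat) (B1 B2 B : 'M[R]_2) : (0 < p)%N -> (0 < n)%N ->
  gd p n B1 -> gd p n B2 -> B1 + B2 = B -> gd p n B.
Proof. by move=> p0 n0 [G1 g1] [G2 g2] <-; exists (G1 *m G2); apply: good_mul. Qed.

Lemma gd_muln {R : realType} (p n k : nat) (B : 'M[R]_2) : (0 < p)%N -> (0 < n)%N ->
  gd p n B -> gd p n (B *+ k).
Proof. by move=> p0 n0 [G g]; exists (G ^+ k); apply: good_pow. Qed.

Lemma gd_congr {R : realType} (p n : nat) (B B' : 'M[R]_2) : (0 < p)%N ->
  gd p n B -> zmx B' -> dvm (p%:R : R) (B - B') -> gd p n B'.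
Proof. by move=> p0 [G g] z d; exists G; apply: good_congr g z d. Qed.

Lemma gd_zmx {R : realType} (p n : nat) (B : 'M[R]_2) : gd p n B -> zmx B.
Proof. by case=> G []. Qed.

Lemma gd_neg {R : realType} (p n : nat) (B B' : 'M[R]_2) : (0 < p)%N -> (0 < n)%N ->
  gd p n B -> - B = B' -> gd p n B'.
Proof.
move=> p0 n0 g <-; apply: (@gd_congr _ _ _ (B *+ p.-1)) => //.
- exact: gd_muln.
- by apply: zmxN; apply: gd_zmx g.
rewrite opprK -mulrSr prednK //.
have -> : B *+ p = (p%:R : R) *: B by rewrite scaler_nat.
apply: dvm_mulq.
  by rewrite pnatr_eq0 -lt0n.
exact: gd_zmx g.
Qed.

Lemma gd_conj {R : realType} (p n : nat) (h B B' : 'M[R]_2) : H5 h ->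
  gd p n B -> h *m B *m invmx h = B' -> gd p n B'.
Proof. by move=> hh [G g] <-; exists (h *m G *m invmx h); apply: good_conj. Qed.

Lemma invS {R : realType} : invmx (Smx R) = mx2 0 (-1) 1 0.
Proof. by rewrite /Smx invmx2; [apply: mx2_eq; ring|ring]. Qed.

Lemma invT {R : realType} : invmx (Tmx R) = mx2 1 (- lam R) 0 1.
Proof. by rewrite /Tmx invmx2; [apply: mx2_eq; ring|ring]. Qed.

Lemma dvm_mx2 {R : realType} (q a b c d : R) : dvs q a -> dvs q b -> dvs q c -> dvs q d ->
  dvm q (mx2 a b c d).
Proof. by move=> *; apply: I2_ind; apply: I2_ind; rewrite !mxE. Qed.

Lemma basis {R : realType} (p n : nat) : prime p -> odd p -> (0 < n)%N ->
  gd p n (mx2 0 1 0 (0 : R)) ->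
  [/\ gd p n (mx2 0 (lam R) 0 0), gd p n (mx2 0 0 1 (0 : R)), gd p n (mx2 0 0 (lam R) 0),
      gd p n (mx2 1 0 0 (-1 : R)) & gd p n (mx2 (lam R) 0 0 (- lam R))].
Proof.
move=> pr po n0 g12.
have p0 : (0 < p)%N by apply: prime_gt0.
set l := lam R.
have L2 : l * l = l + 1 by rewrite -expr2 lam2.
have Zl_l : l \in Zl R := Zl_lam R.
have hS : H5 (Smx R) := H5_S R.
have hT : H5 (Tmx R) := H5_T R.
have g21 : gd p n (mx2 0 0 1 (0 : R)).
  apply: (gd_neg p0 n0 (B := mx2 0 0 (-1) 0)).
    apply: (gd_conj hS g12); rewrite invS /Smx !mx2_mul; apply: mx2_eq; ring.
  by rewrite mx2_opp; apply: mx2_eq; ring.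
have gA : gd p n (mx2 l (- (l * l)) 0 (- l)).
  have gM1 : gd p n (mx2 l (- (l * l)) 1 (- l)).
    apply: (gd_conj hT g21); rewrite invT /Tmx !mx2_mul; apply: mx2_eq; rewrite /l; ring.
  have gN : gd p n (mx2 0 0 (-1) (0 : R)) by apply: (gd_neg p0 n0 g21); rewrite mx2_opp; apply: mx2_eq; ring.
  by apply: (gd_add p0 n0 gM1 gN); rewrite mx2_add; apply: mx2_eq; ring.
have gD : gd p n (mx2 0 (- (l * l) *+ 2) 0 (0 : R)).
  have gTA : gd p n (mx2 l (- (l * l) *+ 3) 0 (- l)).
    apply: (gd_conj hT gA); rewrite invT /Tmx !mx2_mul; apply: mx2_eq; rewrite /l; ring.
  have gNA : gd p n (mx2 (- l) (l * l) 0 l) by apply: (gd_neg p0 n0 gA); rewrite mx2_opp; apply: mx2_eq; ring.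
  by apply: (gd_add p0 n0 gTA gNA); rewrite mx2_add; apply: mx2_eq; ring.
have gL2 : gd p n (mx2 0 (l * l) 0 (0 : R)).
  apply: (gd_congr p0 (gd_muln p.-1./2 p0 n0 gD)).
    by apply: zmx_mx2; rewrite ?rpred0 //; apply: rpredM.
  rewrite mx2_muln mx2_opp mx2_add.
  have hp : (p.-1./2 * 2 = p.-1)%N.
    by move: po; case: (p) => [|p'] //= po; rewrite muln2 halfK (negbTE po) subn0.
  have -> : - (l * l) *+ 2 *+ p.-1./2 + - (l * l) = p%:R * (- (l * l)).
    rewrite -mulrnA mulnC hp -mulrSr prednK // mulr_natl; ring.
  apply: dvm_mx2; rewrite ?mul0rn ?oppr0 ?addr0; try exact: dvs0.
  by apply: dvs_mulq; [rewrite pnatr_eq0 -lt0n|rewrite rpredN; apply: rpredM].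
have gL12 : gd p n (mx2 0 l 0 (0 : R)).
  have gN12 : gd p n (mx2 0 (-1) 0 (0 : R)) by apply: (gd_neg p0 n0 g12); rewrite mx2_opp; apply: mx2_eq; ring.
  by apply: (gd_add p0 n0 gL2 gN12); rewrite mx2_add L2; apply: mx2_eq; ring.
have gLH : gd p n (mx2 l 0 0 (- l)).
  by apply: (gd_add p0 n0 gA gL2); rewrite mx2_add; apply: mx2_eq; ring.
have gL21 : gd p n (mx2 0 0 l (0 : R)).
  apply: (gd_neg p0 n0 (B := mx2 0 0 (- l) 0)).
    apply: (gd_conj hS gL12); rewrite invS /Smx !mx2_mul; apply: mx2_eq; ring.
  by rewrite mx2_opp; apply: mx2_eq; ring.
split => //.
have g1 : gd p n (mx2 (l * l) (- (l * l * l)) l (- (l * l))).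
  apply: (gd_conj hT gL21); rewrite invT /Tmx !mx2_mul; apply: mx2_eq; rewrite /l; ring.
have gNL21 : gd p n (mx2 0 0 (- l) (0 : R)) by apply: (gd_neg p0 n0 gL21); rewrite mx2_opp; apply: mx2_eq; ring.
have g2 := gd_add p0 n0 g1 gNL21 (erefl _).
have g3 : gd p n (mx2 0 (l *+ 2 + 1) 0 (0 : R)).
  by apply: (gd_add p0 n0 (gd_muln 2 p0 n0 gL12) g12); rewrite mx2_muln mx2_add; apply: mx2_eq; ring.
have g4 := gd_add p0 n0 g2 g3 (erefl _).
have gNLH : gd p n (mx2 (- l) 0 0 l) by apply: (gd_neg p0 n0 gLH); rewrite mx2_opp; apply: mx2_eq; ring.
apply: (gd_add p0 n0 g4 gNLH); rewrite !mx2_add; apply: mx2_eq.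
- by rewrite addr0 L2; ring.
- have L3 : l * l * l = l *+ 2 + 1 by rewrite L2 mulrDl L2 mul1r; ring.
  by rewrite L3; ring.
- ring.
- by rewrite addr0 L2; ring.
Qed.

Lemma index_fin {R : realType} (G K : 'M[R]_2 -> Prop) (T : finType) (k : nat)
  (hk : #|T| = k) (f : T -> 'M[R]_2) :
  (forall t, G (f t)) -> (forall g, G g -> exists! t, K (invmx (f t) *m g)) ->
  index_eq G K k.
Proof.
move=> hG hu.
exists (fun i => f (enum_val (cast_ord (esym hk) i))); split => // x gx.
have [t [ht tu]] := hu x gx.
exists (cast_ord hk (enum_rank t)); split.
  by rewrite cast_ordK enum_rankK.
move=> i hi; have := tu _ hi => e.
by rewrite e enum_valK cast_ordKV.
Qed.

Lemma tower {R : realType} (G K L : 'M[R]_2 -> Prop) (a b : nat) :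
  (forall x, G x -> H5 x) -> (forall x, K x -> G x) -> (forall x, L x -> K x) ->
  (forall x y, K x -> K y -> K (x *m y)) -> (forall x y, G x -> G y -> G (x *m y)) ->
  index_eq G K a -> index_eq K L b -> index_eq G L (a * b).
Proof.
move=> GH KG LK Kmul Gmul [f [hf uf]] [g [hg ug]].
have hk : #|{: 'I_a * 'I_b}| = (a * b)%N by rewrite card_prod !card_ord.
apply: (@index_fin _ G L _ _ hk (fun t => f t.1 *m g t.2)).
  by move=> [i j] /=; apply: Gmul => //; apply: KG.
move=> x gx.
have Hf i : H5 (f i) by apply: GH.
have Hg j : H5 (g j) by apply: GH; apply: KG.
have e i j : invmx (f i *m g j) *m x = invmx (g j) *m (invmx (f i) *m x).
  by rewrite invmxMM // mulmxA.
have [i [hi ui]] := uf x gx.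
have [j [hj uj]] := ug _ hi.
exists (i, j); split => /=; first by rewrite e.
move=> [i' j'] /=; rewrite e => h.
have hi' : K (invmx (f i') *m x).
  have := Kmul _ _ (hg j') (LK _ h).
  by rewrite !mulmxA (mulmxV (H5_unit (Hg j'))) mul1mx.
have ii := ui _ hi'; subst i'.
by rewrite (uj _ h).
Qed.

Lemma crit {R : realType} (p n : nat) (F B g : 'M[R]_2) : (0 < p)%N ->
  goodG p n F B -> H5 g ->
  Hcong ((p%:R : R) ^+ n.+1) (invmx F *m g) <->
  dvm (p%:R : R) (((p%:R : R) ^+ n)^-1 *: (g - 1%:M) - B).
Proof.
move=> p0 gF hg; have := gF => -[hF hB dF].
rewrite coset_crit //; last exact: Pnz.
set c := (p%:R : R) ^+ n.
have c0 : c != 0 by apply: Pnz.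
have e1 : g - F = (g - 1%:M - c *: B) - (F - 1%:M - c *: B).
  by apply/matrixP => i j; rewrite !mxE; ring.
have e2 : g - 1%:M - c *: B = c *: (c^-1 *: (g - 1%:M) - B).
  by rewrite scalerBr scalerA mulfV // scale1r.
rewrite e1 e2 exprSr.
split => h.
- apply/(dvm_scale _ _ c0).
  have -> : c *: (c^-1 *: (g - 1%:M) - B) =
    (c *: (c^-1 *: (g - 1%:M) - B) - (F - 1%:M - c *: B)) + (F - 1%:M - c *: B) by rewrite subrK.
  by apply: dvmD => //; rewrite -exprSr.
- apply: dvmB; first by apply/(dvm_scale _ _ c0).
  by rewrite -exprSr.
Qed.

Lemma mxsubE {R : realType} (A B : 'M[R]_2) i j : (A - B) i j = A i j - B i j.
Proof. by rewrite !mxE. Qed.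

Lemma mxscaleE {R : realType} (a : R) (A : 'M[R]_2) i j : (a *: A) i j = a * A i j.
Proof. by rewrite !mxE. Qed.

Definition Ymx {R : realType} (p n : nat) (g : 'M[R]_2) : 'M[R]_2 :=
  ((p%:R : R) ^+ n)^-1 *: (g - 1%:M).

Lemma trace_div {R : realType} (p n : nat) (g : 'M[R]_2) : (0 < p)%N -> (0 < n)%N ->
  H5 g -> dvm ((p%:R : R) ^+ n) (g - 1%:M) ->
  dvs (p%:R : R) (Ymx p n g ord0 ord0 + Ymx p n g ord_max ord_max).
Proof.
move=> p0 n0 hg d; rewrite /Ymx; set Y := _ *: _.
set c := (p%:R : R) ^+ n.
have c0 : c != 0 by apply: Pnz.
have hdet := H5_det hg.
rewrite (mx2_eta g) mx2_det in hdet.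
have [h00 [h01 [h10 h11]]] := @onemxE R.
have ya : g ord0 ord0 = 1 + c * Y ord0 ord0 by rewrite /Y mxscaleE mxsubE h00 mulVKf // addrC subrK.
have yd : g ord_max ord_max = 1 + c * Y ord_max ord_max by rewrite /Y mxscaleE mxsubE h11 mulVKf // addrC subrK.
have yb : g ord0 ord_max = c * Y ord0 ord_max by rewrite /Y mxscaleE mxsubE h01 subr0 mulVKf.
have yc : g ord_max ord0 = c * Y ord_max ord0 by rewrite /Y mxscaleE mxsubE h10 subr0 mulVKf.
have zY i j : Y i j \in Zl R by move: (d i j); rewrite /Y mxscaleE.
rewrite ya yd yb yc in hdet.
set y00 := Y ord0 ord0 in hdet *; set y11 := Y ord_max ord_max in hdet *.
set y01 := Y ord0 ord_max in hdet *; set y10 := Y ord_max ord0 in hdet *.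
have e : c * ((y00 + y11) + c * (y00 * y11 - y01 * y10)) = 0.
  by rewrite -[RHS](subrr 1) -{1}hdet; ring.
move/eqP: e; rewrite mulf_eq0 (negbTE c0) /= => /eqP e.
have -> : y00 + y11 = (p%:R : R) * (- ((p%:R : R) ^+ n.-1 * (y00 * y11 - y01 * y10))).
  rewrite mulrN mulrA -exprS prednK // -/c; rewrite -[LHS]subr0 -e; ring.
apply: dvs_mulq; first by rewrite pnatr_eq0 -lt0n.
rewrite rpredN rpredM // ?ZlX //; apply: rpredB; apply: rpredM; exact: zY.
Qed.

Definition TT (p : nat) := (('I_p * 'I_p) * (('I_p * 'I_p) * ('I_p * 'I_p)))%type.

Definition zl {R : realType} (p : nat) (uv : 'I_p * 'I_p) : R :=
  (uv.1 : nat)%:R + (uv.2 : nat)%:R * lam R.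

Definition Bof {R : realType} (p : nat) (t : TT p) : 'M[R]_2 :=
  mx2 (zl t.2.2) (zl t.1) (zl t.2.1) (- zl t.2.2).

Lemma zl_Zl {R : realType} (p : nat) (uv : 'I_p * 'I_p) : zl (R := R) uv \in Zl R.
Proof. by rewrite /zl; apply: rpredD; [apply: rpred_nat|apply: rpredM; [apply: rpred_nat|apply: Zl_lam]]. Qed.

Lemma zl_uniq {R : realType} p (uv uv' : 'I_p * 'I_p) :
  dvs (p%:R : R) (zl uv - zl uv') -> uv = uv'.
Proof.
case: uv uv' => u v [u' v'] h.
by have [-> ->] := @residue_uniq R p u v u' v' h.
Qed.

Lemma zl_ex {R : realType} p (x : R) : (0 < p)%N -> x \in Zl R ->
  exists uv : 'I_p * 'I_p, dvs (p%:R : R) (x - zl uv).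
Proof.
by move=> p0 hx; have [u [v h]] := @residue R p x p0 hx; exists (u, v).
Qed.

Lemma level_index {R : realType} (p n : nat) : prime p -> odd p -> (0 < n)%N ->
  gd p n (mx2 0 1 0 (0 : R)) ->
  index_eq (Hcong ((p%:R : R) ^+ n)) (Hcong ((p%:R : R) ^+ n.+1)) (p ^ 6).
Proof.
move=> pr po n0 g1.
have p0 : (0 < p)%N by apply: prime_gt0.
have [g2 g3 g4 g5 g6] := basis pr po n0 g1.
case: g1 => [G1 h1]; case: g2 => [G2 h2]; case: g3 => [G3 h3].
case: g4 => [G4 h4]; case: g5 => [G5 h5]; case: g6 => [G6 h6].
have hk : #|{: TT p}| = (p ^ 6)%N.
  by rewrite /TT !card_prod !card_ord !expnS expn0 muln1 !mulnA.
set F := fun t : TT p =>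
  G1 ^+ t.1.1 *m G2 ^+ t.1.2 *m G3 ^+ t.2.1.1 *m G4 ^+ t.2.1.2 *m G5 ^+ t.2.2.1 *m G6 ^+ t.2.2.2.
have gF t : goodG p n (F t) (Bof t).
  have := good_mul p0 n0 (good_mul p0 n0 (good_mul p0 n0 (good_mul p0 n0 (good_mul p0 n0
    (good_pow t.1.1 p0 n0 h1) (good_pow t.1.2 p0 n0 h2))
    (good_pow t.2.1.1 p0 n0 h3)) (good_pow t.2.1.2 p0 n0 h4))
    (good_pow t.2.2.1 p0 n0 h5)) (good_pow t.2.2.2 p0 n0 h6).
  move/good_eq; apply.
  rewrite /Bof /zl !mx2_muln !mx2_add; apply: mx2_eq; rewrite /=; ring.
apply: (@index_fin _ _ _ _ _ hk F).
  move=> t; apply/HcongE; first exact: Pnz.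
  by have := gF t => -[hF _ _]; split => //; apply: good_dvm (gF t).
move=> g /(HcongE _ (Pnz _ p0)) [hg dg].
have tr := trace_div p0 n0 hg dg.
have zY i j : Ymx p n g i j \in Zl R by move: (dg i j); rewrite /Ymx mxscaleE.
have ex2 : forall Bt : TT p, dvm (p%:R : R) (Ymx p n g - Bof Bt) <->
  [/\ dvs (p%:R : R) (Ymx p n g ord0 ord0 - zl Bt.2.2),
      dvs (p%:R : R) (Ymx p n g ord0 ord_max - zl Bt.1) &
      dvs (p%:R : R) (Ymx p n g ord_max ord0 - zl Bt.2.1)].
  move=> Bt; split.
    move=> h; split.
    - by move: (h ord0 ord0); rewrite mxsubE /Bof !mxE.
    - by move: (h ord0 ord_max); rewrite mxsubE /Bof !mxE.
    - by move: (h ord_max ord0); rewrite mxsubE /Bof !mxE.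
  case=> a b c; rewrite [Ymx p n g]mx2_eta /Bof mx2_opp mx2_add; apply: dvm_mx2 => //.
  have -> : Ymx p n g ord_max ord_max + - - zl Bt.2.2 =
    (Ymx p n g ord0 ord0 + Ymx p n g ord_max ord_max) - (Ymx p n g ord0 ord0 - zl Bt.2.2).
    by ring.
  exact: dvsB.
have [uv0 e0] := zl_ex p0 (zY ord0 ord_max).
have [uv1 e1] := zl_ex p0 (zY ord_max ord0).
have [uv2 e2] := zl_ex p0 (zY ord0 ord0).
exists (uv0, (uv1, uv2)); split.
  by apply/(crit p0 (gF _) hg); apply/ex2.
move=> t /(crit p0 (gF _) hg) /ex2 [a b c].
case: t a b c => [t0 [t1 t2]] /= a b c.
have D x y z : dvs (p%:R : R) (x - y) -> dvs (p%:R : R) (x - z) -> dvs (p%:R : R) (y - z).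
  move=> h h'; have -> : y - z = (x - z) - (x - y) by ring.
  exact: (@dvsB R _ _ _ h' h).
by rewrite (zl_uniq (D _ _ _ e0 b)) (zl_uniq (D _ _ _ e1 c)) (zl_uniq (D _ _ _ e2 a)).
Qed.

Definition rmx {R : realType} (p : nat) (A : 'M[R]_2) (r : {ffun 'I_2 * 'I_2 -> 'I_p * 'I_p}) :=
  forall i j, dvs (p%:R : R) (A i j - zl (r (i, j))).

Lemma rmx_ex {R : realType} (p : nat) (A : 'M[R]_2) : (0 < p)%N -> zmx A -> exists r : {ffun 'I_2 * 'I_2 -> 'I_p * 'I_p}, rmx A r.
Proof.
move=> p0 zA.
exists [ffun ij => sval (cid (zl_ex p0 (zA ij.1 ij.2)))] => i j.
rewrite ffunE /=; exact: (svalP (cid (zl_ex p0 (zA i j)))).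
Qed.

Lemma rmx_uniq {R : realType} (p : nat) (A : 'M[R]_2) (r r' : {ffun 'I_2 * 'I_2 -> 'I_p * 'I_p}) : rmx A r -> rmx A r' -> r = r'.
Proof.
move=> h h'; apply/ffunP => -[i j]; apply: (@zl_uniq R).
have -> : zl (r (i, j)) - zl (r' (i, j)) = (A i j - zl (r' (i, j))) - (A i j - zl (r (i, j))) :> R by ring.
exact: (@dvsB R _ _ _ (h' i j) (h i j)).
Qed.

Lemma rmx_congr {R : realType} (p : nat) (A B : 'M[R]_2) (r : {ffun 'I_2 * 'I_2 -> 'I_p * 'I_p}) : rmx A r -> dvm (p%:R : R) (B - A) -> rmx B r.
Proof.
move=> h d i j.
have -> : B i j - zl (r (i, j)) = (B - A) i j + (A i j - zl (r (i, j))) by rewrite mxsubE; ring.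
exact: (@dvsD R _ _ _ (d i j) (h i j)).
Qed.

Lemma rmx_dvm {R : realType} (p : nat) (A B : 'M[R]_2) (r : {ffun 'I_2 * 'I_2 -> 'I_p * 'I_p}) : rmx A r -> rmx B r -> dvm (p%:R : R) (B - A).
Proof.
move=> ha hb i j.
have -> : (B - A) i j = (B i j - zl (r (i, j))) - (A i j - zl (r (i, j))) by rewrite mxsubE; ring.
exact: (@dvsB R _ _ _ (hb i j) (ha i j)).
Qed.

Lemma base_index {R : realType} (p : nat) : (0 < p)%N ->
  exists k, index_eq (@H5 R) (Hcong (p%:R : R)) k.
Proof.
move=> p0.
have pz : (p%:R : R) != 0 by rewrite pnatr_eq0 -lt0n.
pose S := [set r : {ffun 'I_2 * 'I_2 -> 'I_p * 'I_p} | `[< exists A : 'M[R]_2, H5 A /\ rmx A r >]].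
exists #|S|.
have exA (i : 'I_#|S|) : exists A : 'M[R]_2, H5 A /\ rmx A (enum_val i).
  by have := enum_valP i; rewrite inE => /asboolP.
pose f i := sval (cid (exA i)).
have hf i : H5 (f i) /\ rmx (f i) (enum_val i) := svalP (cid (exA i)).
apply: (@index_fin _ _ _ _ _ (card_ord _) f); first by move=> i; case: (hf i).
move=> x hx.
have [r hr] := rmx_ex p0 (H5_zmx hx).
have rS : r \in S by rewrite inE; apply/asboolP; exists x.
exists (enum_rank_in rS r); split.
  apply/(coset_crit pz (proj1 (hf _)) hx).
  have := proj2 (hf (enum_rank_in rS r)); rewrite enum_rankK_in // => hfi.
  exact: rmx_dvm hfi hr.
move=> i /(coset_crit pz (proj1 (hf _)) hx) d.
have h2 : rmx x (enum_val i) by apply: rmx_congr (proj2 (hf i)) d.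
have e := rmx_uniq hr h2.
by apply: enum_val_inj; rewrite enum_rankK_in // -e.
Qed.

Unset Implicit Arguments.

Theorem proposition4p3 (R : realType) (p : nat) :
  prime p -> odd p ->
  (exists sigma : 'M[R]_2,
      Hcong (p%:R : R) sigma /\
      congmx ((p ^ 2)%:R : R) sigma (mx2 1 (p%:R : R) 0 1)) ->
  (forall n : nat, (0 < n)%N ->
      index_eq (Hcong ((p ^ n)%:R : R)) (Hcong ((p ^ n.+1)%:R : R)) (p ^ 6)) /\
  (forall n : nat, (0 < n)%N ->
      exists k : nat,
        index_eq (@H5 R) (Hcong (p%:R : R)) k /\
        index_eq (@H5 R) (Hcong ((p ^ n)%:R : R)) (p ^ (6 * (n - 1)) * k)).
Proof.
move=> pr po [sigma [hs cs]].
have p0 : (0 < p)%N by apply: prime_gt0.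
have pz : (p%:R : R) != 0 by rewrite pnatr_eq0 -lt0n.
have g1 : gd p 1 (mx2 0 1 0 (0 : R)).
  exists sigma; split.
  - by case: hs.
  - by apply: zmx_mx2; rewrite ?rpred0 ?rpred1.
  have cs' : congmx ((p%:R : R) ^+ 2) sigma (mx2 1 (p%:R : R) 0 1) by rewrite -natrX.
  move: (proj1 (congmxE sigma (mx2 1 (p%:R : R) 0 1) (Pnz 2 p0)) cs').
  have -> : mx2 1 (p%:R : R) 0 1 = 1%:M + (p%:R : R) ^+ 1 *: mx2 0 1 0 0.
    by rewrite mx2_one mx2_scale mx2_add; apply: mx2_eq; ring.
  by rewrite opprD addrA.
have gn n : (0 < n)%N -> gd p n (mx2 0 1 0 (0 : R)).
  elim: n => [//|[|n] IH] _; first exact: g1.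
  by have [G g] := IH isT; exists (G ^+ p); apply: good_lift.
have L1 n : (0 < n)%N -> index_eq (Hcong ((p ^ n)%:R : R)) (Hcong ((p ^ n.+1)%:R : R)) (p ^ 6).
  by move=> n0; rewrite !natrX; apply: level_index => //; apply: gn.
split => // n n0.
have [k hk] := @base_index R p p0.
exists k; split => //.
elim: n n0 => [//|[|n] IH] _.
  by rewrite muln0 expn0 mul1n expn1.
have := tower (a := (p ^ (6 * (n.+1 - 1)) * k)%N) (b := (p ^ 6)%N) _ _ _ _ _ (IH isT) (L1 n.+1 isT).
have -> : (p ^ (6 * (n.+2 - 1)) * k = p ^ (6 * (n.+1 - 1)) * k * p ^ 6)%N.
  by rewrite !subn1 /= -mulnA [(k * _)%N]mulnC mulnA -expnD mulnS addnC.
apply.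
- by [].
- by move=> x [].
- move=> x; rewrite !natrX => h; apply: Hcong_le h => //.
- by move=> x y hx hy; rewrite natrX in hx hy *; apply: Hcong_mul => //; apply: Pnz.
- by move=> x y; apply: H5_mul.
Qed.
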